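(* Let $M=\langle n_1,n_2,n_3\rangle$ be a numerical monoid of embedding dimension three with minimal generators $n_1<n_2<n_3$. Then: (1) for all $(a,b,c)\in\mathsf{Z}(\alpha(M)n_2-n_1)$ we have $b=0$; (2) if $L(\alpha(M)n_2)\neq L(\alpha(M)n_2-n_1)+1$, then $L(\alpha(M)n_2)=\alpha(M)$; (3) $L(\alpha(M)n_2)\neq L(\alpha(M)n_2-n_1)+1$ if and only if for all $(a,b,c)\in\mathsf{Z}(\alpha(M)n_2)$ with $b=0$ we have $a+c<\alpha(M)$; (4) if $\alpha(M)=2$ or $\alpha(M)=n_1$, then $L(\alpha(M)n_2)=L(\alpha(M)n_2-n_1)+1$; (5) $\alpha(M)\leq n_1$. Analogously: (1') for all $(a,b,c)\in\mathsf{Z}(\beta(M)n_2-n_3)$ we have $b=0$; (2') if $\ell(\beta(M)n_2)\neq \ell(\beta(M)n_2-n_3)+1$, then $\ell(\beta(M)n_2)=\beta(M)$; (3') $\ell(\beta(M)n_2)\neq \ell(\beta(M)n_2-n_3)+1$ if and only if for all $(a,b,c)\in\mathsf{Z}(\beta(M)n_2)$ with $b=0$ we have $a+c>\beta(M)$; (4') if $\beta(M)=n_3$, then $\ell(\beta(M)n_2)=\ell(\beta(M)n_2-n_3)+1$; (5') $\beta(M)\leq n_3$.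
   Context: $\mathbb{N}$ denotes the nonnegative integers. A numerical monoid is a submonoid of $\mathbb{N}$ with finite complement. For $x\in M$, $\mathsf{Z}(x)=\{(a_1,a_2,a_3)\in\mathbb{N}^3\mid a_1n_1+a_2n_2+a_3n_3=x\}$; the length of a factorization is $a_1+a_2+a_3$; $L(x)$ and $\ell(x)$ are the maximum and minimum factorization lengths of $x$. Define $\alpha(M)=\min\{b\in\mathbb{N}\mid bn_2-n_1\in M\}$ and $\beta(M)=\min\{b\in\mathbb{N}\mid bn_2-n_3\in M\}$. *)

(* Defs.v *)
From mathcomp Require Import all_boot.
Set Implicit Arguments. Unset Strict Implicit. Unset Printing Implicit Defensive.

Definition emb_dim3 (n1 n2 n3 : nat) : Prop :=
  [/\ 0 < n1, n1 < n2, n2 < n3 & gcdn (gcdn n1 n2) n3 = 1] /\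
  [/\ ~ (exists b c, n1 = b * n2 + c * n3),
      ~ (exists a c, n2 = a * n1 + c * n3) &
      ~ (exists a b, n3 = a * n1 + b * n2)].

(* Membership in M (boolean).  The search bound a,b,c <= x is exhaustive as
   soon as the generators are positive, which holds under emb_dim3. *)
Definition inM (n1 n2 n3 x : nat) : bool :=
  [exists a : 'I_x.+1, exists b : 'I_x.+1, exists c : 'I_x.+1,
     a * n1 + b * n2 + c * n3 == x].

Definition alpha_pred (n1 n2 n3 : nat) (b : nat) : bool :=
  (n1 <= b * n2) && inM n1 n2 n3 (b * n2 - n1).
Definition beta_pred (n1 n2 n3 : nat) (b : nat) : bool :=
  (n3 <= b * n2) && inM n1 n2 n3 (b * n2 - n3).

(* The disjuncts (b == n1), (b == n3) only guarantee existence for ex_minn;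
   under emb_dim3, alpha_pred n1 and beta_pred n3 hold, so these are exactly
   the minima alpha(M), beta(M) of the paper. *)
Lemma alpha_ex n1 n2 n3 : exists b, alpha_pred n1 n2 n3 b || (b == n1).
Proof. by exists n1; rewrite eqxx orbT. Qed.
Lemma beta_ex n1 n2 n3 : exists b, beta_pred n1 n2 n3 b || (b == n3).
Proof. by exists n3; rewrite eqxx orbT. Qed.

Definition alpha (n1 n2 n3 : nat) : nat := ex_minn (alpha_ex n1 n2 n3).
Definition beta (n1 n2 n3 : nat) : nat := ex_minn (beta_ex n1 n2 n3).

(* Set of factorizations Z(x), as a list of triples ((a,b),c); the bound
   a,b,c <= x is exhaustive for positive generators. *)
Definition factorizations (n1 n2 n3 x : nat) : seq (nat * nat * nat) :=
  [seq t <- [seq (p, c) | p <- [seq (a, b) | a <- iota 0 x.+1, b <- iota 0 x.+1],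
                    c <- iota 0 x.+1]
     | t.1.1 * n1 + t.1.2 * n2 + t.2 * n3 == x].

Definition flen (t : nat * nat * nat) : nat := t.1.1 + t.1.2 + t.2.

Definition Lmax (n1 n2 n3 x : nat) : nat :=
  \max_(t <- factorizations n1 n2 n3 x) flen t.

(* Minimum factorization length l(x); the neutral element 3x+1 exceeds every
   factorization length, so for x in M this is the true minimum. *)
Definition lmin (n1 n2 n3 x : nat) : nat :=
  \big[minn/(3 * x).+1]_(t <- factorizations n1 n2 n3 x) flen t.

(* Main.v *)
Require Import Defs.
From mathcomp Require Import all_boot zify.
Set Implicit Arguments. Unset Strict Implicit.

Lemma mem_fact n1 n2 n3 x a b c : 0 < n1 -> 0 < n2 -> 0 < n3 ->
  (((a, b), c) \in factorizations n1 n2 n3 x) = (a * n1 + b * n2 + c * n3 == x).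
Proof.
move=> h1 h2 h3; rewrite mem_filter [X in X && _]/=.
case E: (a * n1 + b * n2 + c * n3 == x); rewrite ?andbF // andTb.
move/eqP: E => E.
apply/allpairsP; exists ((a, b), c); split => //.
  change ((a, b) \in [seq (a0, b0) | a0 <- iota 0 x.+1, b0 <- iota 0 x.+1]).
  apply/allpairsP; exists (a, b); split => //; rewrite mem_iota /=; nia.
rewrite mem_iota /=; nia.
Qed.

Lemma fact_mem n1 n2 n3 x t : t \in factorizations n1 n2 n3 x ->
  t.1.1 * n1 + t.1.2 * n2 + t.2 * n3 = x.
Proof. by rewrite mem_filter => /andP[/eqP]. Qed.

Lemma inM_intro n1 n2 n3 x a b c : 0 < n1 -> 0 < n2 -> 0 < n3 ->
  a * n1 + b * n2 + c * n3 = x -> inM n1 n2 n3 x.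
Proof.
move=> h1 h2 h3 E; apply/existsP.
have ha : a < x.+1 by nia.
have hb : b < x.+1 by nia.
have hc : c < x.+1 by nia.
exists (Ordinal ha); apply/existsP; exists (Ordinal hb); apply/existsP;
  exists (Ordinal hc); by apply/eqP.
Qed.

Lemma inM_elim n1 n2 n3 x : inM n1 n2 n3 x ->
  exists a b c, a * n1 + b * n2 + c * n3 = x.
Proof.
by move=> /existsP[a /existsP[b /existsP[c /eqP E]]]; exists a, b, c.
Qed.

Lemma big_att (op : nat -> nat -> nat) d (s : seq (nat*nat*nat)) F :
  (forall u v, op u v = u \/ op u v = v) ->
  \big[op/d]_(t <- s) F t = d \/ exists2 t, t \in s & F t = \big[op/d]_(t <- s) F t.
Proof.
move=> hop; elim: s => [|h s IH]; first by rewrite big_nil; left.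
rewrite big_cons; case: (hop (F h) (\big[op/d]_(j <- s) F j)) => ->.
  by right; exists h => //; rewrite mem_head.
case: IH => [->|[t ts <-]]; first by left.
by right; exists t => //; rewrite inE ts orbT.
Qed.

Lemma maxn_or u v : maxn u v = u \/ maxn u v = v.
Proof. case: (leqP u v) => h; [right|left]; lia. Qed.
Lemma minn_or u v : minn u v = u \/ minn u v = v.
Proof. case: (leqP u v) => h; [left|right]; lia. Qed.
Lemma ar1 n2 n3 b c k : 0 < n2 -> n2 < n3 -> b*n2 + c*n3 = k*n2 -> b + c <= k.
Proof. move=> h2 h23 E; have : (b + c) * n2 <= k * n2 by nia.
by rewrite leq_pmul2r. Qed.
Lemma ar2 n2 n3 c k : n2 < n3 -> c*n3 = k*n2 -> 0 < k -> c < k.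
Proof. move=> h23 E hk; rewrite ltnNge; apply/negP => hc; nia. Qed.
Lemma ar3 n1 n2 a b k : 0 < n1 -> n1 < n2 -> a*n1 + b*n2 = k*n2 -> k <= a + b.
Proof. move=> h1 h12 E; have : k * n2 <= (a + b) * n2 by nia.
by rewrite leq_pmul2r //; lia. Qed.
Lemma ar4 n1 n2 a k : 0 < n1 -> n1 < n2 -> a*n1 = k*n2 -> 0 < k -> k < a.
Proof. move=> h1 h12 E hk; rewrite ltnNge; apply/negP => hc; nia. Qed.

Lemma Lmax_ge n1 n2 n3 x a b c : 0 < n1 -> 0 < n2 -> 0 < n3 ->
  a*n1 + b*n2 + c*n3 = x -> a + b + c <= Lmax n1 n2 n3 x.
Proof.
move=> h1 h2 h3 E; rewrite /Lmax.
apply: (leq_bigmax_seq ((a, b), c) (P := xpredT) (F := flen)) => //.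
by rewrite mem_fact // E.
Qed.

Lemma Lmax_att n1 n2 n3 x : 0 < n1 -> 0 < n2 -> 0 < n3 ->
  (exists a b c, a*n1 + b*n2 + c*n3 = x) ->
  exists a b c, a*n1 + b*n2 + c*n3 = x /\ a + b + c = Lmax n1 n2 n3 x.
Proof.
move=> h1 h2 h3 [a0 [b0 [c0 E0]]].
case: (big_att 0 (factorizations n1 n2 n3 x) flen maxn_or).
  move=> HL; exists a0, b0, c0; split => //.
  have := Lmax_ge h1 h2 h3 E0; rewrite /Lmax HL; lia.
move=> [[[a b] c] ht HF]; exists a, b, c; split; first exact: (fact_mem ht).
exact: HF.
Qed.

Lemma bigmin_le (s : seq (nat*nat*nat)) (d : nat) (F : nat*nat*nat -> nat) t0 : t0 \in s ->
  \big[minn/d]_(t <- s) F t <= F t0.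
Proof.
elim: s => [|h s IH] //; rewrite inE big_cons => /predU1P[->|hs].
  exact: geq_minl.
exact: leq_trans (geq_minr _ _) (IH hs).
Qed.

Lemma lmin_le n1 n2 n3 x a b c : 0 < n1 -> 0 < n2 -> 0 < n3 ->
  a*n1 + b*n2 + c*n3 = x -> lmin n1 n2 n3 x <= a + b + c.
Proof.
move=> h1 h2 h3 E; rewrite /lmin.
apply: (@bigmin_le _ (3*x).+1 flen ((a, b), c)).
by rewrite mem_fact // E.
Qed.

Lemma lmin_att n1 n2 n3 x : 0 < n1 -> 0 < n2 -> 0 < n3 ->
  (exists a b c, a*n1 + b*n2 + c*n3 = x) ->
  exists a b c, a*n1 + b*n2 + c*n3 = x /\ a + b + c = lmin n1 n2 n3 x.
Proof.
move=> h1 h2 h3 [a0 [b0 [c0 E0]]].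
case: (big_att (3 * x).+1 (factorizations n1 n2 n3 x) flen minn_or).
  move=> HL; exfalso.
  have := lmin_le h1 h2 h3 E0; rewrite /lmin HL; nia.
move=> [[[a b] c] ht HF]; exists a, b, c; split; first exact: (fact_mem ht).
exact: HF.
Qed.
Lemma part_alpha n1 n2 n3 al : 0 < n1 -> n1 < n2 -> n2 < n3 ->
  n1 <= al * n2 -> inM n1 n2 n3 (al * n2 - n1) ->
  (forall b, b < al -> ~~ alpha_pred n1 n2 n3 b) -> al <= n1 ->
  [/\
      (forall a b c, a * n1 + b * n2 + c * n3 = al * n2 - n1 -> b = 0),
      (Lmax n1 n2 n3 (al * n2) <> (Lmax n1 n2 n3 (al * n2 - n1)).+1 ->
         Lmax n1 n2 n3 (al * n2) = al),
      (Lmax n1 n2 n3 (al * n2) <> (Lmax n1 n2 n3 (al * n2 - n1)).+1 <->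
         (forall a b c, a * n1 + b * n2 + c * n3 = al * n2 -> b = 0 ->
            a + c < al)),
      (al = 2 \/ al = n1 ->
         Lmax n1 n2 n3 (al * n2) = (Lmax n1 n2 n3 (al * n2 - n1)).+1) &
      al <= n1].
Proof.
move=> h1 h12 h23 hle hin hmin hn1.
have h2 : 0 < n2 by lia.
have h3 : 0 < n3 by lia.
have al0 : 0 < al by case: al hle {hmin hn1 hin} => //; rewrite mul0n; lia.
have P1 : forall a b c, a*n1+b*n2+c*n3 = al*n2 - n1 -> b = 0.
  move=> a b c; case: b => // b E; exfalso.
  have /negP := hmin al.-1 ltac:(lia); apply.
  have ek : al = al.-1.+1 by lia.
  move: E hle; rewrite ek !mulSn => E hle'.
  rewrite /alpha_pred; apply/andP; split; first by lia.
  apply: (inM_intro h1 h2 h3 (a := a) (b := b) (c := c)); lia.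
have ex' := inM_elim hin.
have Lge : (Lmax n1 n2 n3 (al*n2 - n1)).+1 <= Lmax n1 n2 n3 (al*n2).
  have [a [b [c [E <-]]]] := Lmax_att h1 h2 h3 ex'.
  have b0 := P1 _ _ _ E; subst b.
  have := Lmax_ge (a := a.+1) (b := 0) (c := c) h1 h2 h3; rewrite mulSn.
  move=> H; have := H (al * n2); lia.
have Lal : al <= Lmax n1 n2 n3 (al*n2).
  have := Lmax_ge (a := 0) (b := al) (c := 0) h1 h2 h3; rewrite !mul0n.
  move=> H; have := H (al * n2); lia.
have key : forall a b c, a*n1+b*n2+c*n3 = al*n2 ->
    a+b+c <= (Lmax n1 n2 n3 (al*n2 - n1)).+1 \/ (a = 0 /\ b + c <= al).
  move=> [|a] b c E.
    right; split => //; apply: (ar1 h2 h23); move: E; rewrite mul0n; lia.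
  left; move: E; rewrite mulSn => E.
  have := Lmax_ge (a := a) (b := b) (c := c) h1 h2 h3 (x := al*n2 - n1); lia.
have exL : exists a b c, a*n1+b*n2+c*n3 = al*n2.
  by exists 0, al, 0; rewrite !mul0n; lia.
have P2 : Lmax n1 n2 n3 (al * n2) <> (Lmax n1 n2 n3 (al * n2 - n1)).+1 ->
         Lmax n1 n2 n3 (al * n2) = al.
  move=> hne; have [a [b [c [E HL]]]] := Lmax_att h1 h2 h3 exL.
  case: (key _ _ _ E) => [H|[a0 H]]; lia.
have P3 : Lmax n1 n2 n3 (al * n2) <> (Lmax n1 n2 n3 (al * n2 - n1)).+1 <->
         (forall a b c, a * n1 + b * n2 + c * n3 = al * n2 -> b = 0 ->
            a + c < al).
  split.
    move=> hne a b c E b0; subst b; have Lx := P2 hne.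
    case: a E => [|a] E.
      apply: (ar2 h23) => //; move: E; rewrite !mul0n; lia.
    move: E; rewrite mulSn mul0n => E.
    have := Lmax_ge (a := a) (b := 0) (c := c) h1 h2 h3 (x := al*n2 - n1).
    rewrite mul0n; lia.
  move=> H hEq.
  have [a [b [c [E HL]]]] := Lmax_att h1 h2 h3 ex'.
  have b0 := P1 _ _ _ E; subst b.
  have := H a.+1 0 c; rewrite mulSn; move: E; rewrite mul0n => E H'.
  have := H' ltac:(lia) erefl; lia.
split => //.
move=> hal; case: (eqVneq (Lmax n1 n2 n3 (al * n2))
   (Lmax n1 n2 n3 (al * n2 - n1)).+1) => // /eqP hne; exfalso.
have H := (proj1 P3) hne.
case: hal => hal.
  have [a [b [c E]]] := ex'; have b0 := P1 _ _ _ E; subst b.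
  have := H a.+1 0 c; rewrite mulSn; move: E; rewrite mul0n => E H'.
  have := H' ltac:(lia) erefl; rewrite hal in E *; nia.
have := H n2 0 0; rewrite !mul0n hal mulnC => H'.
have := H' ltac:(lia) erefl; lia.
Qed.
Lemma part_beta n1 n2 n3 be : 0 < n1 -> n1 < n2 -> n2 < n3 ->
  n3 <= be * n2 -> inM n1 n2 n3 (be * n2 - n3) ->
  (forall b, b < be -> ~~ beta_pred n1 n2 n3 b) -> be <= n3 ->
  [/\
      (forall a b c, a * n1 + b * n2 + c * n3 = be * n2 - n3 -> b = 0),
      (lmin n1 n2 n3 (be * n2) <> (lmin n1 n2 n3 (be * n2 - n3)).+1 ->
         lmin n1 n2 n3 (be * n2) = be),
      (lmin n1 n2 n3 (be * n2) <> (lmin n1 n2 n3 (be * n2 - n3)).+1 <->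
         (forall a b c, a * n1 + b * n2 + c * n3 = be * n2 -> b = 0 ->
            be < a + c)),
      (be = n3 ->
         lmin n1 n2 n3 (be * n2) = (lmin n1 n2 n3 (be * n2 - n3)).+1) &
      be <= n3].
Proof.
move=> h1 h12 h23 hle hin hmin hn3.
have h2 : 0 < n2 by lia.
have h3 : 0 < n3 by lia.
have be0 : 0 < be by case: be hle {hmin hn3 hin} => //; rewrite mul0n; lia.
have P1 : forall a b c, a*n1+b*n2+c*n3 = be*n2 - n3 -> b = 0.
  move=> a b c; case: b => // b E; exfalso.
  have /negP := hmin be.-1 ltac:(lia); apply.
  have ek : be = be.-1.+1 by lia.
  move: E hle; rewrite ek !mulSn => E hle'.
  rewrite /beta_pred; apply/andP; split; first by lia.
  apply: (inM_intro h1 h2 h3 (a := a) (b := b) (c := c)); lia.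
have ex' := inM_elim hin.
have Lle : lmin n1 n2 n3 (be*n2) <= (lmin n1 n2 n3 (be*n2 - n3)).+1.
  have [a [b [c [E <-]]]] := lmin_att h1 h2 h3 ex'.
  have b0 := P1 _ _ _ E; subst b.
  have := lmin_le (a := a) (b := 0) (c := c.+1) h1 h2 h3; rewrite mulSn.
  move=> H; have := H (be * n2); lia.
have Lbe : lmin n1 n2 n3 (be*n2) <= be.
  have := lmin_le (a := 0) (b := be) (c := 0) h1 h2 h3; rewrite !mul0n.
  move=> H; have := H (be * n2); lia.
have key : forall a b c, a*n1+b*n2+c*n3 = be*n2 ->
    (lmin n1 n2 n3 (be*n2 - n3)).+1 <= a+b+c \/ (c = 0 /\ be <= a + b).
  move=> a b [|c] E.
    right; split => //; apply: (ar3 h1 h12); move: E; rewrite mul0n; lia.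
  left; move: E; rewrite mulSn => E.
  have := lmin_le (a := a) (b := b) (c := c) h1 h2 h3 (x := be*n2 - n3); lia.
have exL : exists a b c, a*n1+b*n2+c*n3 = be*n2.
  by exists 0, be, 0; rewrite !mul0n; lia.
have P2 : lmin n1 n2 n3 (be * n2) <> (lmin n1 n2 n3 (be * n2 - n3)).+1 ->
         lmin n1 n2 n3 (be * n2) = be.
  move=> hne; have [a [b [c [E HL]]]] := lmin_att h1 h2 h3 exL.
  case: (key _ _ _ E) => [H|[c0 H]]; lia.
have P3 : lmin n1 n2 n3 (be * n2) <> (lmin n1 n2 n3 (be * n2 - n3)).+1 <->
         (forall a b c, a * n1 + b * n2 + c * n3 = be * n2 -> b = 0 ->
            be < a + c).
  split.
    move=> hne a b c E b0; subst b; have Lx := P2 hne.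
    case: c E => [|c] E.
      rewrite addn0; apply: (ar4 h1 h12) => //; move: E; rewrite !mul0n; lia.
    move: E; rewrite mulSn mul0n => E.
    have := lmin_le (a := a) (b := 0) (c := c) h1 h2 h3 (x := be*n2 - n3).
    rewrite mul0n; lia.
  move=> H hEq.
  have [a [b [c [E HL]]]] := lmin_att h1 h2 h3 ex'.
  have b0 := P1 _ _ _ E; subst b.
  have := H a 0 c.+1; rewrite mulSn; move: E; rewrite mul0n => E H'.
  have := H' ltac:(lia) erefl; lia.
split => //.
move=> hbe; case: (eqVneq (lmin n1 n2 n3 (be * n2))
   (lmin n1 n2 n3 (be * n2 - n3)).+1) => // /eqP hne; exfalso.
have H := (proj1 P3) hne.
have := H 0 0 n2; rewrite !mul0n hbe mulnC => H'.
have := H' ltac:(lia) erefl; lia.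
Qed.

Theorem mainTheorem6 (n1 n2 n3 : nat) :
  emb_dim3 n1 n2 n3 ->
  let al := alpha n1 n2 n3 in
  let be := beta n1 n2 n3 in
  [/\ (* (1) *)
      (forall a b c, a * n1 + b * n2 + c * n3 = al * n2 - n1 -> b = 0),
      (* (2) *)
      (Lmax n1 n2 n3 (al * n2) <> (Lmax n1 n2 n3 (al * n2 - n1)).+1 ->
         Lmax n1 n2 n3 (al * n2) = al),
      (* (3) *)
      (Lmax n1 n2 n3 (al * n2) <> (Lmax n1 n2 n3 (al * n2 - n1)).+1 <->
         (forall a b c, a * n1 + b * n2 + c * n3 = al * n2 -> b = 0 ->
            a + c < al)),
      (* (4) *)
      (al = 2 \/ al = n1 ->
         Lmax n1 n2 n3 (al * n2) = (Lmax n1 n2 n3 (al * n2 - n1)).+1) &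
      (* (5) *)
      al <= n1]
  /\
  [/\ (* (1') *)
      (forall a b c, a * n1 + b * n2 + c * n3 = be * n2 - n3 -> b = 0),
      (* (2') *)
      (lmin n1 n2 n3 (be * n2) <> (lmin n1 n2 n3 (be * n2 - n3)).+1 ->
         lmin n1 n2 n3 (be * n2) = be),
      (* (3') *)
      (lmin n1 n2 n3 (be * n2) <> (lmin n1 n2 n3 (be * n2 - n3)).+1 <->
         (forall a b c, a * n1 + b * n2 + c * n3 = be * n2 -> b = 0 ->
            be < a + c)),
      (* (4') *)
      (be = n3 ->
         lmin n1 n2 n3 (be * n2) = (lmin n1 n2 n3 (be * n2 - n3)).+1) &
      (* (5') *)
      be <= n3].
Proof.
move=> [[h1 h12 h23 _] _] /=.
have h2 : 0 < n2 by lia.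
have h3 : 0 < n3 by lia.
split.
  rewrite /alpha; case: ex_minnP => m Hm Hmin.
  have Pn1 : alpha_pred n1 n2 n3 n1.
    rewrite /alpha_pred; apply/andP; split; first by nia.
    apply: (inM_intro h1 h2 h3 (a := n2.-1) (b := 0) (c := 0)).
    rewrite !mul0n !addn0 -subn1 mulnBl mul1n mulnC //.
  have Hm' : alpha_pred n1 n2 n3 m by case/orP: Hm => // /eqP ->.
  have mle : m <= n1 by apply: Hmin; rewrite eqxx orbT.
  case/andP: Hm' => hle hin.
  apply: part_alpha => // b hb; apply/negP => Hb.
  have := Hmin b; rewrite Hb => /(_ isT); lia.
rewrite /beta; case: ex_minnP => m Hm Hmin.
have Pn3 : beta_pred n1 n2 n3 n3.
  rewrite /beta_pred; apply/andP; split; first by nia.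
  apply: (inM_intro h1 h2 h3 (a := 0) (b := 0) (c := n2.-1)).
  rewrite !mul0n !add0n -subn1 mulnBl mul1n mulnC //.
have Hm' : beta_pred n1 n2 n3 m by case/orP: Hm => // /eqP ->.
have mle : m <= n3 by apply: Hmin; rewrite eqxx orbT.
case/andP: Hm' => hle hin.
apply: part_beta => // b hb; apply/negP => Hb.
have := Hmin b; rewrite Hb => /(_ isT); lia.
Qed.
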